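(* Let $q\ge3$ be a prime power and let $\{P_i\}$ be an infinite family of toric codes over $\mathbb{F}_q$, with $P_i\subseteq[0,q-2]^{n_i}$. If there is $I$ such that $L(P_i)\le q-3$ for all $i\ge I$, then $R(P_i)\to0$ as $i\to\infty$.
   Context: For an integral convex polytope $P\subseteq[0,q-2]^n$, $R(P)=|P\cap\mathbb{Z}^n|/(q-1)^n$ and $\delta(P)=\big((q-1)^n-N(P)\big)/(q-1)^n$, where $N(P)$ is the maximum number of zeros in $(\mathbb{F}_q^\times)^n$ of a nonzero $\mathbb{F}_q$-linear combination of the monomials $x^p$, $p\in P\cap\mathbb{Z}^n$. A sequence of nonempty integral convex polytopes $P_i\subseteq[0,q-2]^{n_i}$ is an infinite family of toric codes if $n_i\to\infty$ and $\delta(P_i)$, $R(P_i)$ converge. The Minkowski length $\ell(P)$ is the largest number of summands in a decomposition of $P$ as a Minkowski sum of lattice polytopes of positive dimension ($\ell=0$ for a point); the full Minkowski length is $L(P)=\max\{\ell(Q):Q\subseteq P\text{ a lattice polytope}\}$. *)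

(* Defs.v *)
From HB Require Import structures.
From mathcomp Require Import all_boot all_order all_algebra all_field.
From mathcomp Require Import all_classical all_reals all_analysis.
Set Implicit Arguments. Unset Strict Implicit. Unset Printing Implicit Defensive.
Import Order.TTheory GRing.Theory Num.Theory numFieldNormedType.Exports.
Local Open Scope ring_scope.

Section Polytopes.
Variable R : realType.

Definition lattice_pt n (x : 'rV[R]_n) : Prop :=
  forall j : 'I_n, exists z : int, x ord0 j = z%:~R.

Definition conv n (S : seq 'rV[R]_n) (x : 'rV[R]_n) : Prop :=
  exists w : 'I_(size S) -> R,
    (forall i, 0 <= w i) /\ \sum_i w i = 1 /\ x = \sum_i w i *: S`_i.

Definition lattice_polytope n (P : set 'rV[R]_n) : Prop :=
  exists S : seq 'rV[R]_n, S != [::] /\ (forall s, s \in S -> lattice_pt s) /\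
    (forall x, P x <-> conv S x).

Definition pos_dim n (P : set 'rV[R]_n) : Prop :=
  exists x y, P x /\ P y /\ x != y.

Definition msum n l (Qs : 'I_l -> set 'rV[R]_n) (x : 'rV[R]_n) : Prop :=
  exists y : 'I_l -> 'rV[R]_n, (forall i, Qs i (y i)) /\ x = \sum_i y i.

(* P is a Minkowski sum of l lattice polytopes of positive dimension
   (l = 0 : the trivial, empty decomposition) *)
Definition mdecomp n (P : set 'rV[R]_n) (l : nat) : Prop :=
  l = 0%N \/ exists Qs : 'I_l -> set 'rV[R]_n,
    (forall i, lattice_polytope (Qs i) /\ pos_dim (Qs i)) /\
    (forall x, P x <-> msum Qs x).

Definition is_minkowski_length n (P : set 'rV[R]_n) (l : nat) : Prop :=
  mdecomp P l /\ forall m, mdecomp P m -> (m <= l)%N.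

Definition is_full_minkowski_length n (P : set 'rV[R]_n) (L : nat) : Prop :=
  (exists Q, lattice_polytope Q /\ (forall x, Q x -> P x) /\
             is_minkowski_length Q L) /\
  (forall Q l, lattice_polytope Q -> (forall x, Q x -> P x) ->
             is_minkowski_length Q l -> (l <= L)%N).

Definition in_box n (b : nat) (P : set 'rV[R]_n) : Prop :=
  forall x, P x -> forall j : 'I_n, 0 <= x ord0 j <= b%:R.

End Polytopes.

Section ToricCodes.
Variables (R : realType) (F : finFieldType).

Local Notation q := #|F|.

Definition expo n := {ffun 'I_n -> 'I_(q.-1)}.

Definition expo_pt n (e : expo n) : 'rV[R]_n := \row_j ((e j : nat)%:R).

Definition lpts n (P : set 'rV[R]_n) : {set expo n} :=
  [set e : expo n | `[< P (expo_pt e) >]].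

Definition peval n (c : {ffun expo n -> F}) (t : {ffun 'I_n -> F}) : F :=
  \sum_(e : expo n) c e * \prod_(j : 'I_n) t j ^+ (e j : nat).

Definition nzeros n (c : {ffun expo n -> F}) : nat :=
  #|[set t : {ffun 'I_n -> F} | [forall j, t j != 0] && (peval c t == 0)]|.

Definition Nmax n (P : set 'rV[R]_n) : nat :=
  \max_(c : {ffun expo n -> F} |
          (c != 0) && [forall e, (c e != 0) ==> (e \in lpts P)]) nzeros c.

Definition rate n (P : set 'rV[R]_n) : R :=
  (#|lpts P|)%:R / ((q.-1) ^ n)%:R.

Definition mindist n (P : set 'rV[R]_n) : R :=
  (((q.-1) ^ n)%:R - (Nmax P)%:R) / ((q.-1) ^ n)%:R.

Definition toric_family (nn : nat -> nat) (P : forall i, set 'rV[R]_(nn i)) :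
    Prop :=
  (forall i, lattice_polytope (P i) /\ in_box q.-2 (P i)) /\
  (forall M, exists I, forall i, (I <= i)%N -> (M <= nn i)%N) /\
  cvgn (fun i => mindist (P i)) /\ cvgn (fun i => rate (P i)).

End ToricCodes.

(* Main.v *)
Require Import Defs.
From HB Require Import structures.
From mathcomp Require Import all_boot all_order all_algebra all_field.
From mathcomp Require Import all_classical all_reals all_analysis.
Import Order.TTheory GRing.Theory Num.Theory numFieldNormedType.Exports.
Local Open Scope ring_scope.
Local Open Scope classical_set_scope.
Set Implicit Arguments. Unset Strict Implicit. Unset Printing Implicit Defensive.
From mathcomp Require Import lra.
From mathcomp Require Import zify.
Local Notation conv := Defs.conv.
Section Geo.
Variable R : realType.
Variable n : nat.
Implicit Types (S : seq 'rV[R]_n) (x y a b : 'rV[R]_n).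

Lemma conv_comb S x y t : conv S x -> conv S y -> 0 <= t <= 1 ->
  conv S ((1 - t) *: x + t *: y).
Proof.
move=> [wx [wx0 [wx1 ->]]] [wy [wy0 [wy1 ->]]] /andP[t0 t1].
exists (fun i => (1 - t) * wx i + t * wy i); split.
  by move=> i; rewrite addr_ge0 // mulr_ge0 ?wx0 ?wy0 // subr_ge0.
split.
  by rewrite big_split /= -!mulr_sumr wx1 wy1 !mulr1 subrK.
rewrite !scaler_sumr -big_split /=; apply: eq_bigr => i _ /=.
by rewrite [in RHS]scalerDl !scalerA.
Qed.

Lemma conv_mem S s : s \in S -> conv S s.
Proof.
move=> sS.
have hi : (index s S < size S)%N by rewrite index_mem.
exists (fun i : 'I_(size S) => if val i == index s S then 1 else 0); split.
  by move=> i; case: ifP.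
split.
  rewrite (bigD1 (Ordinal hi)) //= ?eqxx big1 ?addr0 // => i /negbTE.
  by case: ifP => // /eqP h; rewrite -val_eqE /= h eqxx.
rewrite (bigD1 (Ordinal hi)) //= ?eqxx scale1r big1 ?addr0 ?nth_index //.
move=> i /negbTE; case: ifP => // /eqP h; first by rewrite -val_eqE /= h eqxx.
by rewrite scale0r.
Qed.

Lemma conv_const S s0 x : conv S x -> (forall s, s \in S -> s = s0) -> x = s0.
Proof.
move=> [w [_ [w1 ->]]] h.
rewrite (eq_bigr (fun i => w i *: s0)); last first.
  by move=> i _; rewrite (h (S`_i)) // mem_nth.
by rewrite -scaler_suml w1 scale1r.
Qed.

Lemma segE a b t : a + t *: (b - a) = (1 - t) *: a + t *: b.
Proof. by rewrite scalerBr scalerBl scale1r addrAC addrA. Qed.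

Definition seg a b : set 'rV[R]_n :=
  fun x => exists t, 0 <= t <= 1 /\ x = a + t *: (b - a).

Lemma seg_conv a b x : seg a b x <-> conv [:: a; b] x.
Proof.
split.
  move=> [t [/andP[t0 t1] ->]].
  exists (fun i : 'I_2 => if val i == 0%N then 1 - t else t); split.
    by move=> i; case: ifP => _ //; rewrite subr_ge0.
  split; first by rewrite big_ord_recl big_ord1 /= subrK.
  by rewrite big_ord_recl big_ord1 /= segE.
move=> [w [w0 [w1 ->]]].
exists (w (lift ord0 ord0)); split.
  rewrite w0 /=; move: w1; rewrite big_ord_recl big_ord1 => <-.
  by rewrite lerDr w0.
move: w1; rewrite !big_ord_recl !big_ord0 !addr0 /= => w1.
have -> : w ord0 = 1 - w (lift ord0 ord0) by rewrite -w1 addrK.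
by rewrite segE.
Qed.

Lemma seg_sub S a b : conv S a -> conv S b -> forall x, seg a b x -> conv S x.
Proof.
move=> ha hb x [t [t01 ->]].
rewrite segE.
exact: conv_comb.
Qed.

End Geo.
Section Mink.
Variable R : realType.
Variable n : nat.
Implicit Types (S : seq 'rV[R]_n) (x y a b w : 'rV[R]_n).
Local Notation lat := (@lattice_pt R n).

Lemma lat0 : lat 0.
Proof. by move=> j; exists 0; rewrite mxE. Qed.

Lemma latD x y : lat x -> lat y -> lat (x + y).
Proof.
move=> hx hy j; have [zx hzx] := hx j; have [zy hzy] := hy j.
by exists (zx + zy); rewrite mxE hzx hzy intrD.
Qed.

Lemma lat_int x y (j : 'I_n) : lat x -> lat y -> exists z : int, (x - y) ord0 j = z%:~R.
Proof.
move=> hx hy; have [zx hzx] := hx j; have [zy hzy] := hy j.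
by exists (zx - zy); rewrite !mxE hzx hzy intrB.
Qed.

Lemma seg_lat a b : lat a -> lat b -> lattice_polytope (seg a b).
Proof.
move=> ha hb; exists [:: a; b]; split => //; split.
  by move=> s; rewrite !inE => /orP[] /eqP ->.
by move=> x; apply: seg_conv.
Qed.

Lemma seg_pos a b : a != b -> pos_dim (seg a b).
Proof.
move=> ab; exists a, b; split; first by exists 0; rewrite lexx ler01 scale0r addr0.
split => //; exists 1; rewrite lexx ler01 scale1r; split => //.
by rewrite addrC subrK.
Qed.

End Mink.
Section Mink2.
Variable R : realType.
Variable n : nat.
Implicit Types (S : seq 'rV[R]_n) (x y a b w : 'rV[R]_n).
Local Notation lat := (@lattice_pt R n).

Lemma segkE a w k x : seg a (a + k *: w) x <->
  exists t, 0 <= t <= 1 /\ x = a + (t * k) *: w.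
Proof.
rewrite /seg; have -> : a + k *: w - a = k *: w by rewrite addrAC subrr add0r.
by split => -[t [t01 ->]]; exists t; split => //; rewrite scalerA.
Qed.

Lemma seg_mdecomp a w k : (0 < k)%N -> w != 0 -> lat a -> lat w ->
  mdecomp (seg a (a + k%:R *: w)) k.
Proof.
move=> k0 w0 la lw; right.
pose c (i : 'I_k) : 'rV[R]_n := if val i == 0%N then a else 0.
have sc : \sum_i c i = a.
  rewrite (bigD1 (Ordinal k0)) //= /c /= big1 ?addr0 // => i.
  by rewrite -val_eqE /= => /negbTE ->.
exists (fun i => seg (c i) (c i + w)); split.
  move=> i; have lc : lat (c i) by rewrite /c; case: ifP => _ //; apply: lat0.
  split; first by apply: seg_lat => //; apply: latD.
  apply: seg_pos; rewrite -subr_eq0 opprD addrA subrr sub0r oppr_eq0 //.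
move=> x; rewrite segkE; split.
  move=> [t [/andP[t0 t1] ->]].
  exists (fun i => c i + t *: w); split.
    move=> i; exists t; rewrite t0 t1; split => //.
    by rewrite addrAC subrr add0r.
  rewrite big_split /= sc sumr_const card_ord.
  by rewrite scalerMnl mulr_natr.
move=> [y [hy ->]].
have hy' : forall i, exists t, 0 <= t <= 1 /\ y i = c i + t *: w.
  move=> i; have [t [t01 ->]] := hy i.
  by exists t; rewrite addrAC subrr add0r.
have [tt htt] := boolp.choice hy'.
have kR : 0 < (k%:R : R) by rewrite ltr0n.
exists ((\sum_i tt i) / k%:R); split.
  apply/andP; split.
    apply: divr_ge0; last exact: ltW.
    by apply: sumr_ge0 => i _; case/andP: (htt i).1.
  rewrite ler_pdivrMr // mul1r.
  have -> : (k%:R : R) = \sum_(i < k) 1 by rewrite sumr_const card_ord.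
  by apply: ler_sum => i _; case/andP: (htt i).1.
rewrite divfK ?gt_eqF // (eq_bigr (fun i => c i + tt i *: w)); last first.
  by move=> i _; rewrite (htt i).2.
by rewrite big_split /= sc scaler_suml.
Qed.

End Mink2.
Section Mink3.
Variable R : realType.
Variable n : nat.
Implicit Types (S : seq 'rV[R]_n) (x y a b w : 'rV[R]_n).
Local Notation lat := (@lattice_pt R n).

Lemma seg_diff a w (k : R) x y : 0 <= k -> seg a (a + k *: w) x -> seg a (a + k *: w) y ->
  exists r, x - y = r *: w /\ `|r| <= k.
Proof.
move=> k0 /segkE [t [/andP[t0 t1] ->]] /segkE [s [/andP[s0 s1] ->]].
exists (t * k - s * k); split.
  by rewrite opprD addrA (addrAC a) subrr add0r scalerBl.
rewrite -mulrBl normrM (ger0_norm k0) ler_piMl //.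
by rewrite ler_norml; apply/andP; split; lra.
Qed.

Lemma lat_pair (Q : set 'rV[R]_n) : lattice_polytope Q -> pos_dim Q ->
  exists u v, [/\ Q u, Q v, lat u, lat v & u != v].
Proof.
move=> [S [S0 [SL SQ]]] [p [p' [Qp [Qp' pp']]]].
case: (boolP (all (fun s => s == S`_0) S)) => hall.
  have hc : forall s, s \in S -> s = S`_0 by move=> s /(allP hall) /eqP.
  have := conv_const ((SQ p).1 Qp) hc; have := conv_const ((SQ p').1 Qp') hc.
  by move=> e1 e2; rewrite e1 e2 eqxx in pp'.
have [s sS ns] := allPn hall.
have S0in : S`_0 \in S by rewrite mem_nth // lt0n size_eq0.
exists s, S`_0; split => //; try by apply/SQ/conv_mem.
- exact: SL.
- exact: SL.
Qed.

End Mink3.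
Section Mink4.
Variable R : realType.
Variable n : nat.
Implicit Types (S : seq 'rV[R]_n) (x y a b w : 'rV[R]_n).
Local Notation lat := (@lattice_pt R n).

Lemma int_ge1 (z : int) : z != 0 -> 1 <= `|z%:~R : R|.
Proof. by move=> z0; rewrite -intr_norm -natr_absz ler1n absz_gt0. Qed.

Lemma seg_bound a w k (j0 : 'I_n) (z0 : int) : w ord0 j0 = z0%:~R -> z0 != 0 ->
  forall m, mdecomp (seg a (a + k%:R *: w)) m -> (m <= k * `|z0|)%N.
Proof.
move=> wj z0n m [->//|[Qs [hQs hsum]]].
set Q := seg a (a + k%:R *: w) in hsum *.
have wj0 : w ord0 j0 != 0 by rewrite wj intr_eq0.
have hb : forall i, exists y, Qs i y.
  by move=> i; have [y [_ [Qy _]]] := (hQs i).2; exists y.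
have [b hb'] := boolp.choice hb.
pose X i u := \sum_j (if j == i then u else b j).
have hX : forall i u, Qs i u -> Q (X i u).
  move=> i u Qu; apply/hsum; exists (fun j => if j == i then u else b j); split => //.
  by move=> j; case: eqP => [->|].
have hXd : forall i u v, X i u - X i v = u - v.
  move=> i u v; rewrite /X -sumrB (bigD1 i) //= !eqxx big1 ?addr0 //.
  by move=> j /negbTE ->; rewrite subrr.
have hpair : forall i, exists uv : 'rV[R]_n * 'rV[R]_n,
    [/\ Qs i uv.1, Qs i uv.2 & 1 <= (uv.1 - uv.2) ord0 j0].
  move=> i; have [u [v [Qu Qv lu lv uv]]] := lat_pair (hQs i).1 (hQs i).2.
  have [r [hr _]] := seg_diff (ler0n _ k) (hX i u Qu) (hX i v Qv).
  rewrite hXd in hr.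
  have [z hz] := lat_int j0 lu lv.
  have zn : z != 0.
    apply: contra uv => /eqP ez; move: hz; rewrite ez hr mxE => /eqP.
    rewrite mulf_eq0 (negbTE wj0) orbF => /eqP r0.
    by rewrite -subr_eq0 hr r0 scale0r.
  have := int_ge1 zn; rewrite -hz.
  case: (ltrgt0P ((u - v) ord0 j0)) => hs.
  - by move=> h; exists (u, v).
  - move=> h; exists (v, u); split => //=.
    by rewrite -opprB mxE.
  - by rewrite ler10.
have [uv huv] := boolp.choice hpair.
have Qu : Q (\sum_i (uv i).1).
  by apply/hsum; exists (fun i => (uv i).1); split => // i; case: (huv i).
have Qv : Q (\sum_i (uv i).2).
  by apply/hsum; exists (fun i => (uv i).2); split => // i; case: (huv i).
have [r [hr hrk]] := seg_diff (ler0n _ k) Qu Qv.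
have h1 : (m%:R : R) <= (\sum_i (uv i).1 - \sum_i (uv i).2) ord0 j0.
  rewrite -sumrB summxE.
  have -> : (m%:R : R) = \sum_(i < m) 1 by rewrite sumr_const card_ord.
  by apply: ler_sum => i _; case: (huv i).
have h2 : (\sum_i (uv i).1 - \sum_i (uv i).2) ord0 j0 <= (k * `|z0|)%N%:R.
  rewrite hr mxE wj natrM natr_absz intr_norm.
  apply: (le_trans (ler_norm _)); rewrite normrM ler_wpM2r //.
have := le_trans h1 h2; by rewrite ler_nat.
Qed.

End Mink4.
Section Mink5.
Variable R : realType.
Variable n : nat.
Local Notation lat := (@lattice_pt R n).

Lemma seg_length (a w : 'rV[R]_n) k : (0 < k)%N -> lat a -> lat w -> w != 0 ->
  exists l, is_minkowski_length (seg a (a + k%:R *: w)) l /\ (k <= l)%N.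
Proof.
move=> k0 la lw w0.
have [j0 hj0] : exists j, w ord0 j != 0.
  case: (pickP (fun j => w ord0 j != 0)) => [j hj|h]; first by exists j.
  have w00 : w = 0.
    apply/rowP => j; rewrite mxE; apply/eqP; apply/negPn; by rewrite h.
  by rewrite w00 eqxx in w0.
have [z0 hz] := lw j0.
have z0n : z0 != 0 by apply: contra hj0 => /eqP ez; rewrite hz ez.
pose PP := fun m => `[< mdecomp (seg a (a + k%:R *: w)) m >].
have exP : exists i, PP i by exists k; apply/asboolP; apply: seg_mdecomp.
have ubP : forall i, PP i -> (i <= k * `|z0|)%N.
  by move=> i /asboolP; apply: seg_bound hz z0n i.
case: (ex_maxnP exP ubP) => l /asboolP hl hmax.
exists l; split; last by apply: hmax; apply/asboolP; apply: seg_mdecomp.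
by split => // m hm; apply: hmax; apply/asboolP.
Qed.

End Mink5.
Lemma card_bound (R : realType) (F : finFieldType) n (P : set 'rV[R]_n) :
  (3 <= #|F|)%N -> lattice_polytope P ->
  (exists L, is_full_minkowski_length P L /\ (L <= #|F| - 3)%N) ->
  (#|lpts F P| <= (#|F| - 2) ^ n)%N.
Proof.
move=> q3 [S [S0 [SL SQ]]] [L [[_ hL] Lq]].
set k := (#|F| - 2)%N.
have k0 : (0 < k)%N by rewrite /k subn_gt0.
pose f := fun e : expo F n => [ffun j => Ordinal (ltn_pmod (e j : nat) k0)] : {ffun 'I_n -> 'I_k}.
suff inj : {in lpts F P &, injective f}.
  rewrite -(card_in_imset inj); apply: leq_trans (max_card _) _.
  by rewrite card_ffun !card_ord.
move=> e e' he he' fe; case: (eqVneq e e') => // ne; exfalso.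
have hmod : forall j, (e j %% k = e' j %% k)%N.
  by move=> j; have := congr1 (fun g : {ffun 'I_n -> 'I_k} => val (g j)) fe; rewrite /f !ffunE.
pose w : 'rV[R]_n := \row_j ((((e' j : nat) %/ k)%:Z - ((e j : nat) %/ k)%:Z)%:~R).
have hw : expo_pt R e' = expo_pt R e + k%:R *: w.
  apply/rowP => j; rewrite !mxE intrB.
  rewrite {1}(divn_eq (e' j) k) {1}(divn_eq (e j) k) hmod !natrD !natrM.
  rewrite -!pmulrn; lra.
have latpt : forall e0 : expo F n, lattice_pt (expo_pt R e0).
  by move=> e0 j; exists (e0 j : nat)%:Z; rewrite mxE.
have latw : lattice_pt w.
  by move=> j; exists (((e' j : nat) %/ k)%:Z - ((e j : nat) %/ k)%:Z); rewrite mxE.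
have wn : w != 0.
  apply: contra ne => /eqP w0; move: hw; rewrite w0 scaler0 addr0 => hpt.
  apply/eqP/ffunP => j; apply/val_inj.
  have := congr1 (fun x : 'rV[R]_n => x ord0 j) hpt; rewrite /= !mxE => /eqP.
  by rewrite eqr_nat => /eqP.
have [l [hml kl]] := seg_length k0 (latpt e) latw wn.
have Pe : P (expo_pt R e) by move: he; rewrite inE => /asboolP.
have Pe' : P (expo_pt R e') by move: he'; rewrite inE => /asboolP.
have sub : forall x, seg (expo_pt R e) (expo_pt R e + k%:R *: w) x -> P x.
  move=> x hx; apply/SQ; rewrite -hw in hx.
  exact: (seg_sub ((SQ _).1 Pe) ((SQ _).1 Pe') hx).
rewrite -hw in hml sub.
have := hL _ l (seg_lat (latpt e) (latpt e')) sub hml.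
move: kl Lq q3; rewrite /k; lia.
Qed.
Lemma near_oo (R : realType) (u : nat -> R) : (forall eps : R, 0 < eps -> exists N, forall n, (N <= n)%N -> `|u n| < eps) -> u @ \oo --> 0.
Proof.
move=> h; apply/cvgrPdist_lt => eps eps0.
have [N hN] := h eps eps0.
exists N => // m /= hm.
rewrite sub0r normrN; exact: hN.
Qed.

Lemma expr_small (R : realType) (r : R) eps : `|r| < 1 -> 0 < eps -> exists N, forall n, (N <= n)%N -> `|r ^+ n| < eps.
Proof.
move=> r1 e0.
have := cvg_expr r1; move/cvgrPdist_lt/(_ eps e0) => [N _ hN].
exists N => m hm; have := hN m hm; by rewrite sub0r normrN.
Qed.

Theorem mainTheorem15 (R : realType) (F : finFieldType)
    (nn : nat -> nat) (P : forall i, set 'rV[R]_(nn i)) :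
  (3 <= #|F|)%N ->
  toric_family F P ->
  (exists I, forall i, (I <= i)%N ->
     exists L, is_full_minkowski_length (P i) L /\ (L <= #|F| - 3)%N) ->
  (fun i => rate F (P i)) @ \oo --> (0 : R).
Proof.
move=> q3 [hpoly [hinf _]] [I hI].
set r : R := (#|F| - 2)%:R / (#|F|.-1)%:R.
have q1 : (0 < #|F|.-1)%N by move: q3; lia.
have q1R : (0 : R) < (#|F|.-1)%:R by rewrite ltr0n.
have r0 : 0 <= r by rewrite divr_ge0.
have r1 : r < 1 by rewrite ltr_pdivrMr // mul1r ltr_nat; move: q3; lia.
have hb : forall i, (I <= i)%N -> 0 <= rate F (P i) <= r ^+ nn i.
  move=> i iI; rewrite /rate; apply/andP; split.
    by rewrite divr_ge0.
  rewrite expr_div_n -!natrX ler_wpM2r ?invr_ge0 //.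
  rewrite ler_nat; apply: card_bound => //; first exact: (hpoly i).1.
  exact: hI.
apply: near_oo => eps e0.
have [N hN] := expr_small (R := R) (r := r) (ltac:(by rewrite ger0_norm)) e0.
have [I' hI'] := hinf N.
exists (maxn I I') => i hi.
have [h1 h2] : (I <= i)%N /\ (I' <= i)%N by move: hi; rewrite geq_max => /andP.
have /andP[b0 b1] := hb i h1.
rewrite ger0_norm //; apply: le_lt_trans b1 _.
by have := hN _ (hI' i h2); rewrite ger0_norm ?exprn_ge0.
Qed.
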